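(* Let $G=(V,E)$ be a finite simple connected graph of order $n\geq 2$. Then $\alpha_0(S(G))=n=\beta_0(S(G))$ if and only if $|N(S)|\geq |S|$ for every independent set $S$ of $G$.
   Context: For a finite simple graph $G=(V,E)$, the splitting graph $S(G)$ is obtained from $G$ by adding, for each vertex $v\in V$, a new vertex $v'$, and joining $v'$ to a vertex $u\in V$ if and only if $uv\in E$ (the new vertices are pairwise non-adjacent; the edges of $G$ are kept). For a graph $H$, $\alpha_0(H)$ denotes the vertex cover number (minimum size of a set of vertices meeting every edge) and $\beta_0(H)$ the independence number (maximum size of an independent set). For $S\subseteq V$, $N(S)$ is the set of vertices of $G$ adjacent to some vertex of $S$. *)

(* Defs.v *)
From mathcomp Require Import all_boot.
Set Implicit Arguments. Unset Strict Implicit. Unset Printing Implicit Defensive.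

Definition simple_graph (T : finType) (e : rel T) : Prop :=
  symmetric e /\ irreflexive e.

Definition connected_graph (T : finType) (e : rel T) : Prop :=
  forall x y : T, connect e x y.

(* splitting graph S(G): vertices inl v (original) and inr v (= v');
   edges of G kept, v' ~ u iff uv in E, primed vertices pairwise non-adjacent *)
Definition split_rel (T : finType) (e : rel T) : rel (T + T) :=
  fun a b =>
    match a, b with
    | inl u, inl v => e u v
    | inl u, inr v => e u v
    | inr u, inl v => e u v
    | inr _, inr _ => false
    end.

Definition is_vertex_cover (U : finType) (h : rel U) (C : {set U}) : bool :=
  [forall x, forall y, h x y ==> (x \in C) || (y \in C)].

Definition is_independent (U : finType) (h : rel U) (S : {set U}) : bool :=
  [forall x in S, forall y in S, ~~ h x y].

(* alpha_0: minimum size of a vertex cover (setT is always a cover) *)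
Definition vertex_cover_number (U : finType) (h : rel U) : nat :=
  \big[minn/#|U|]_(C : {set U} | is_vertex_cover h C) #|C|.

Definition independence_number (U : finType) (h : rel U) : nat :=
  \max_(S : {set U} | is_independent h S) #|S|.

Definition nbhd (T : finType) (e : rel T) (S : {set T}) : {set T} :=
  [set y | [exists x in S, e x y]].

(* Main.v *)
Require Import Defs.
From mathcomp Require Import all_boot.
From mathcomp Require Import zify.

Lemma card_sum_set (T : finType) (I : {set T + T}) :
  #|I| = #|[set x | inl x \in I]| + #|[set x | inr x \in I]|.
Proof.
rewrite -!sum1_card big_mkcond big_sumType /=.
by congr (_ + _); rewrite [in RHS]big_mkcond; apply: eq_bigr => i _; rewrite inE.
Qed.

Lemma bigmin_le (I : finType) (P : pred I) (F : I -> nat) x i0 :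
  P i0 -> \big[minn/x]_(i | P i) F i <= F i0.
Proof.
move=> Pi0; rewrite unlock /=.
have : i0 \in index_enum I by rewrite mem_index_enum.
elim: (index_enum I) => //= a r IH; rewrite inE => /orP [/eqP <-|ir].
  by rewrite Pi0 geq_minl.
case: (P a); last exact: IH.
by rewrite geq_min IH ?orbT.
Qed.

Section S.
Variables (T : finType) (e : rel T).
Hypothesis sym : symmetric e.

Lemma indep_bound (I : {set T + T}) :
  (forall S : {set T}, is_independent e S -> #|S| <= #|nbhd e S|) ->
  is_independent (split_rel e) I -> #|I| <= #|T|.
Proof.
move=> hall /forallP indI.
set A := [set x | inl x \in I]; set B := [set x | inr x \in I].
have indA : is_independent e A.
  apply/forallP => x; apply/implyP => xA; apply/forallP => y; apply/implyP => yA.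
  rewrite inE in xA; rewrite inE in yA.
  by have := indI (inl x); rewrite xA /= => /forallP /(_ (inl y)); rewrite yA.
have sub : B \subset ~: nbhd e A.
  apply/subsetP => y; rewrite !inE => yB; apply/negP => /existsP [x /andP [xA exy]].
  rewrite inE in xA.
  by have := indI (inl x); rewrite xA /= => /forallP /(_ (inr y)); rewrite yB /= exy.
have h1 := hall _ indA.
have h2 := subset_leq_card sub.
have h3 := cardsC (nbhd e A).
rewrite card_sum_set -/A -/B; lia.
Qed.

Lemma IN_ge : #|T| <= independence_number (split_rel e).
Proof.
have -> : #|T| = #|[set a : T + T | ~~ is_inl a]|.
  rewrite card_sum_set.
  have -> : [set x | inl x \in [set a : T + T | ~~ is_inl a]] = set0.
    by apply/setP => x; rewrite !inE.
  have -> : [set x | inr x \in [set a : T + T | ~~ is_inl a]] = setT.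
    by apply/setP => x; rewrite !inE.
  by rewrite cards0 cardsT.
apply: (@leq_bigmax_cond _ (fun S : {set T + T} => is_independent (split_rel e) S) (fun S : {set T + T} => #|S|)).
rewrite /is_independent.
apply/forallP => x; apply/implyP; rewrite inE => xI; apply/forallP => y; apply/implyP.
by rewrite inE; case: x xI; case: y.
Qed.

End S.

Theorem corollary2 (T : finType) (e : rel T) :
  simple_graph e -> connected_graph e -> 2 <= #|T| ->
  ((vertex_cover_number (split_rel e) = #|T| /\
    independence_number (split_rel e) = #|T|) <->
   (forall S : {set T}, is_independent e S -> #|S| <= #|nbhd e S|)).
Proof.
move=> [sym irr] _ _; split.
- move=> [_ IN] S indS.
  pose I := [set a : T + T | match a with inl x => x \in S | inr y => y \notin nbhd e S end].
  have indI : is_independent (split_rel e) I.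
    apply/forallP => a; apply/implyP; rewrite inE => aI; apply/forallP => b; apply/implyP.
    rewrite inE; move/forallP: indS => indS.
    case: a aI => [x|x] aI; case: b => [y|y] bI //=.
    + by move: (indS x); rewrite aI /= => /forallP /(_ y); rewrite bI.
    + apply/negP => exy; move/negP: bI; apply; rewrite inE; apply/existsP; exists x.
      by rewrite aI exy.
    + apply/negP => exy; move/negP: aI; apply; rewrite inE; apply/existsP; exists y.
      by rewrite bI sym exy.
  have := @leq_bigmax_cond _ _ (fun S : {set T + T} => #|S|) _ indI.
  rewrite -/(independence_number _) IN card_sum_set.
  have -> : [set x | inl x \in I] = S by apply/setP => x; rewrite !inE.
  have -> : [set x | inr x \in I] = ~: nbhd e S by apply/setP => x; rewrite !inE.
  have := cardsC (nbhd e S); lia.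
- move=> hall.
  have INle : independence_number (split_rel e) <= #|T|.
    by apply/bigmax_leqP => I; apply: indep_bound.
  split; last by apply/eqP; rewrite eqn_leq INle IN_ge.
  apply/eqP; rewrite eqn_leq; apply/andP; split.
  + have cov : is_vertex_cover (split_rel e) [set a : T + T | is_inl a].
      apply/forallP => a; apply/forallP => b; apply/implyP.
      by rewrite !inE; case: a; case: b.
    have hb := @bigmin_le _ _ (fun C : {set T + T} => #|C|) #|{: T + T}| _ cov.
    rewrite /vertex_cover_number. apply: leq_trans hb _.
    rewrite card_sum_set.
    have -> : [set x | inr x \in [set a : T + T | is_inl a]] = set0.
      by apply/setP => x; rewrite !inE.
    by rewrite cards0 addn0 max_card.
  + apply: (big_ind (fun m => #|T| <= m)).
    * by rewrite card_sum leq_addl.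
    * by move=> x y hx hy; rewrite leq_min hx hy.
    * move=> C covC.
      have indC : is_independent (split_rel e) (~: C).
        apply/forallP => a; apply/implyP; rewrite inE => aC; apply/forallP => b.
        apply/implyP; rewrite inE => bC; apply/negP => hab.
        move/forallP: covC => /(_ a) /forallP /(_ b); rewrite hab /=.
        by rewrite (negbTE aC) (negbTE bC).
      have := @indep_bound _ _ _ hall indC.
      have := cardsC C; rewrite card_sum => h1 h2.
      by rewrite -(leq_add2r #|~: C|) h1 leq_add2l.
Qed.
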